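(* Let $\mathcal{C}$ be a category with finite products that has an exponentiable parametrised natural numbers object $N$. (1) A midpoint object $(A,m)$ in $\mathcal{C}$ is iterative if and only if there exists a map $M\colon A^N\to A$ satisfying (Unfolding) $M_i\,x_i = m(x_0, M_i\,x_{i+1})$, and (Canonicity) whenever $(x_i)$ and $(y_i)$ are sequences with $y_i=m(x_i,y_{i+1})$ for all $i$, then $y_0=M_i\,x_i$. Moreover, if $(A,m)$ is iterative then there is a unique map $M\colon A^N\to A$ satisfying Unfolding. (2) If $(A,m)$ and $(A',m')$ are iterative midpoint objects with associated maps $M, M'$ (the unique ones satisfying Unfolding), then every midpoint homomorphism $f\colon A\to A'$ satisfies $f(M_i\,x_i)=M'_i\,f(x_i)$ for all sequences $(x_i)$.
   Context: All equations are between generalised elements (maps into the object from an arbitrary object $Z$); sequences $(x_i)$ of generalised elements of $A$ mean generalised elements of $A^N$, and $M_i\,x_i$ denotes $M((x_i))$. A parametrised natural numbers object is an object $N$ with $0\colon 1\to N$, $s\colon N\to N$ such that for all objects $P,X$ and maps $a\colon P\to X$, $f\colon P\times X\to X$ there is a unique $g\colon P\times N\to X$ with $g(p,0)=a(p)$, $g(p,n+1)=f(p,g(p,n))$. A midpoint object is a pair $(A,m)$ with $m\colon A\times A\to A$ satisfying idempotency $m(x,x)=x$, commutativity $m(x,y)=m(y,x)$ and transposition $m(m(x,y),m(z,w))=m(m(x,z),m(y,w))$. A homomorphism of midpoint objects is a map $h$ with $h(m(x,y))=m'(h(x),h(y))$. $(A,m)$ is iterative if for every map $c\colon X\to A\times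 X$ there is a unique map $u\colon X\to A$ with $m\circ(\mathrm{id}_A\times u)\circ c = u$. *)

(* Defs.v *)
Set Implicit Arguments.
Unset Strict Implicit.

Record Cat := {
  ob :> Type;
  hom : ob -> ob -> Type;
  idm : forall A, hom A A;
  comp : forall A B C, hom B C -> hom A B -> hom A C;
  comp_id_l : forall A B (f : hom A B), comp (idm B) f = f;
  comp_id_r : forall A B (f : hom A B), comp f (idm A) = f;
  comp_assoc : forall A B C D (h : hom C D) (g : hom B C) (f : hom A B),
      comp h (comp g f) = comp (comp h g) f
}.
Arguments hom {c} _ _.
Arguments idm {c} A.
Arguments comp {c A B C} _ _.
Infix "⊚" := comp (at level 40, left associativity).

Record FinProd (C : Cat) : Type := {
  one : C;
  bang : forall A : C, hom A one;
  bang_unique : forall (A : C) (f : hom A one), f = bang A;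
  prod : C -> C -> C;
  p1 : forall A B : C, hom (prod A B) A;
  p2 : forall A B : C, hom (prod A B) B;
  pair : forall Z A B : C, hom Z A -> hom Z B -> hom Z (prod A B);
  p1_pair : forall Z A B (f : hom Z A) (g : hom Z B), p1 A B ⊚ pair f g = f;
  p2_pair : forall Z A B (f : hom Z A) (g : hom Z B), p2 A B ⊚ pair f g = g;
  pair_unique : forall Z A B (h : hom Z (prod A B)),
      h = pair (p1 A B ⊚ h) (p2 A B ⊚ h)
}.
Arguments one {C} f0.
Arguments bang {C} f0 A.
Arguments prod {C} f0 _ _.
Arguments p1 {C} f0 {A B}.
Arguments p2 {C} f0 {A B}.
Arguments pair {C} f0 {Z A B} _ _.

Section Defs.
Variables (C : Cat) (P : FinProd C).

Definition fprod (A B A' B' : C) (f : hom A A') (g : hom B B')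
  : hom (prod P A B) (prod P A' B') :=
  pair P (f ⊚ p1 P) (g ⊚ p2 P).

(* Parametrised natural numbers object (in generalised elements):
   for all a : P0 -> X, f : P0 x X -> X there is a unique
   g : P0 x N -> X with g(p,0) = a(p), g(p,n+1) = f(p,g(p,n)). *)
Definition is_PNNO (N : C) (z : hom (one P) N) (s : hom N N) : Prop :=
  forall (P0 X : C) (a : hom P0 X) (f : hom (prod P P0 X) X),
    exists! g : hom (prod P P0 N) X,
      (forall (Z : C) (p : hom Z P0),
          g ⊚ pair P p (z ⊚ bang P Z) = a ⊚ p) /\
      (forall (Z : C) (p : hom Z P0) (n : hom Z N),
          g ⊚ pair P p (s ⊚ n) = f ⊚ pair P p (g ⊚ pair P p n)).

Record Exponentials (N : C) := {
  expo : C -> C;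
  ev : forall A : C, hom (prod P (expo A) N) A;
  lam : forall Z A : C, hom (prod P Z N) A -> hom Z (expo A);
  ev_lam : forall Z A (f : hom (prod P Z N) A),
      ev A ⊚ fprod (lam f) (idm N) = f;
  lam_unique : forall Z A (f : hom (prod P Z N) A) (g : hom Z (expo A)),
      ev A ⊚ fprod g (idm N) = f -> g = lam f
}.

Section Midpoint.
Variables (A : C) (m : hom (prod P A A) A).

Definition is_midpoint : Prop :=
  (forall Z (x : hom Z A), m ⊚ pair P x x = x) /\
  (forall Z (x y : hom Z A), m ⊚ pair P x y = m ⊚ pair P y x) /\
  (forall Z (x y u w : hom Z A),
      m ⊚ pair P (m ⊚ pair P x y) (m ⊚ pair P u w)
      = m ⊚ pair P (m ⊚ pair P x u) (m ⊚ pair P y w)).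

Definition iterative : Prop :=
  forall (X : C) (c : hom X (prod P A X)),
    exists! u : hom X A, m ⊚ fprod (idm A) u ⊚ c = u.
End Midpoint.

Definition is_midpoint_hom (A A' : C) (m : hom (prod P A A) A)
  (m' : hom (prod P A' A') A') (f : hom A A') : Prop :=
  forall Z (x y : hom Z A), f ⊚ (m ⊚ pair P x y) = m' ⊚ pair P (f ⊚ x) (f ⊚ y).

Section Sequences.
Variables (N : C) (z : hom (one P) N) (s : hom N N) (E : Exponentials N).

Definition at_ (A Z : C) (x : hom Z (expo E A)) (i : hom Z N) : hom Z A :=
  ev E A ⊚ pair P x i.

Definition head (A Z : C) (x : hom Z (expo E A)) : hom Z A :=
  at_ x (z ⊚ bang P Z).

Definition shift (A Z : C) (x : hom Z (expo E A)) : hom Z (expo E A) :=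
  lam E (ev E A ⊚ pair P (x ⊚ p1 P) (s ⊚ p2 P)).

Definition mapseq (A A' Z : C) (f : hom A A') (x : hom Z (expo E A))
  : hom Z (expo E A') :=
  lam E (f ⊚ (ev E A ⊚ fprod x (idm N))).

Definition unfolding (A : C) (m : hom (prod P A A) A) (M : hom (expo E A) A)
  : Prop :=
  forall Z (x : hom Z (expo E A)),
    M ⊚ x = m ⊚ pair P (head x) (M ⊚ shift x).

(* Canonicity: if y_i = m(x_i, y_{i+1}) for all i, then y_0 = M_i x_i.
   "for all i" is read in generalised elements: for every stage W -> Z and
   every index i : W -> N. *)
Definition canonicity (A : C) (m : hom (prod P A A) A) (M : hom (expo E A) A)
  : Prop :=
  forall Z (x y : hom Z (expo E A)),
    (forall W (w : hom W Z) (i : hom W N),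
        at_ (y ⊚ w) i = m ⊚ pair P (at_ (x ⊚ w) i) (at_ (y ⊚ w) (s ⊚ i))) ->
    head y = M ⊚ x.
End Sequences.
End Defs.

(* Main.v *)
Require Import Defs.
Set Implicit Arguments.
Unset Strict Implicit.
Section S.
Variables (C : Cat) (P : FinProd C).

Lemma pair_comp (X Y A B : C) (f : hom Y A) (g : hom Y B) (h : hom X Y) :
  pair P f g ⊚ h = pair P (f ⊚ h) (g ⊚ h).
Proof.
  rewrite (pair_unique (pair P f g ⊚ h)), !comp_assoc, p1_pair, p2_pair; reflexivity.
Qed.

Lemma pair_id (A B : C) : pair P (p1 P (A:=A) (B:=B)) (p2 P) = idm _.
Proof.
  rewrite (pair_unique (idm (prod P A B))), !comp_id_r; reflexivity.
Qed.

Lemma bang_comp (X Y : C) (h : hom X Y) : bang P Y ⊚ h = bang P X.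
Proof. apply bang_unique. Qed.

Lemma pair_p12 (X A B : C) (h : hom X (prod P A B)) : pair P (p1 P ⊚ h) (p2 P ⊚ h) = h.
Proof. symmetry; apply pair_unique. Qed.
End S.

Ltac norm := repeat (first [ rewrite <- comp_assoc | rewrite pair_comp | rewrite p1_pair
  | rewrite p2_pair | rewrite comp_id_l | rewrite comp_id_r | rewrite bang_comp
  | rewrite pair_id | progress unfold fprod ]).

Section S2.
Variables (C : Cat) (P : FinProd C) (N : C) (E : Exponentials P N).

Lemma ev_lam_pair (Z A Y : C) (f : hom (prod P Z N) A) (a : hom Y Z) (b : hom Y N) :
  ev E A ⊚ pair P (lam E f ⊚ a) b = f ⊚ pair P a b.
Proof.
  assert (H : pair P (lam E f ⊚ a) b = fprod P (lam E f) (idm N) ⊚ pair P a b) by (norm; reflexivity).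
  rewrite H, comp_assoc, ev_lam; reflexivity.
Qed.

Lemma ev_lam_pair0 (Z A : C) (f : hom (prod P Z N) A) (b : hom Z N) :
  ev E A ⊚ pair P (lam E f) b = f ⊚ pair P (idm Z) b.
Proof.
  replace (lam E f) with (lam E f ⊚ idm Z) by apply comp_id_r. apply ev_lam_pair.
Qed.

Lemma lam_comp (Z Y A : C) (f : hom (prod P Z N) A) (h : hom Y Z) :
  lam E f ⊚ h = lam E (f ⊚ fprod P h (idm N)).
Proof.
  apply lam_unique.
  assert (H : fprod P (lam E f ⊚ h) (idm N) = fprod P (lam E f) (idm N) ⊚ fprod P h (idm N)).
  { unfold fprod at 2 3. norm. unfold fprod. norm. reflexivity. }
  rewrite H, comp_assoc, ev_lam; reflexivity.
Qed.

Lemma expo_ext (Z A : C) (g1 g2 : hom Z (expo E A)) :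
  ev E A ⊚ pair P (g1 ⊚ p1 P) (p2 P) = ev E A ⊚ pair P (g2 ⊚ p1 P) (p2 P) -> g1 = g2.
Proof.
  intro H.
  assert (H1 : g1 = lam E (ev E A ⊚ pair P (g1 ⊚ p1 P) (p2 P))) by (apply lam_unique; unfold fprod; norm; reflexivity).
  assert (H2 : g2 = lam E (ev E A ⊚ pair P (g2 ⊚ p1 P) (p2 P))) by (apply lam_unique; unfold fprod; norm; reflexivity).
  rewrite H1, H2, H; reflexivity.
Qed.
End S2.

Ltac norm2 := repeat (first [ progress norm | rewrite ev_lam_pair | rewrite ev_lam_pair0 ]).

Section PN.
Variables (C : Cat) (P : FinProd C) (N : C) (z : hom (one P) N) (s : hom N N)
  (HN : is_PNNO z s).

Definition receqs (P0 X : C) (a : hom P0 X) (f : hom (prod P P0 X) X) (g : hom (prod P P0 N) X) :=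
  (forall (Z : C) (p : hom Z P0), g ⊚ pair P p (z ⊚ bang P Z) = a ⊚ p) /\
  (forall (Z : C) (p : hom Z P0) (n : hom Z N),
      g ⊚ pair P p (s ⊚ n) = f ⊚ pair P p (g ⊚ pair P p n)).

Lemma rec_unique (P0 X : C) (a : hom P0 X) f k1 k2 : receqs a f k1 -> receqs a f k2 -> k1 = k2.
Proof.
  intros H1 H2. destruct (HN a f) as [g [_ Hu]].
  rewrite <- (Hu k1 H1), <- (Hu k2 H2). reflexivity.
Qed.

Lemma add_ex : exists add : hom (prod P N N) N,
  (forall Z (p : hom Z N), add ⊚ pair P p (z ⊚ bang P Z) = p) /\
  (forall Z (p n : hom Z N), add ⊚ pair P p (s ⊚ n) = s ⊚ (add ⊚ pair P p n)) /\
  (forall Z (p n : hom Z N), add ⊚ pair P (s ⊚ p) n = s ⊚ (add ⊚ pair P p n)) /\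
  (forall Z (n : hom Z N), add ⊚ pair P (z ⊚ bang P Z) n = n).
Proof.
  destruct (HN (idm N) (s ⊚ p2 P)) as [add [[H0 HS] _]].
  assert (A0 : forall Z (p : hom Z N), add ⊚ pair P p (z ⊚ bang P Z) = p).
  { intros. rewrite H0. apply comp_id_l. }
  assert (AS : forall Z (p n : hom Z N), add ⊚ pair P p (s ⊚ n) = s ⊚ (add ⊚ pair P p n)).
  { intros. rewrite HS. norm. reflexivity. }
  exists add. split; [exact A0|]. split; [exact AS|]. split.
  - assert (E : add ⊚ pair P (s ⊚ p1 P) (p2 P) = s ⊚ add).
    { apply (rec_unique (a := s) (f := s ⊚ p2 P)); split; intros; norm;
        rewrite ?A0, ?AS; norm; try reflexivity. }
    intros. transitivity (add ⊚ pair P (s ⊚ p1 P) (p2 P) ⊚ pair P p n).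
    + norm. reflexivity.
    + rewrite E. norm. reflexivity.
  - assert (E : add ⊚ pair P (z ⊚ p1 P) (p2 P) = p2 P (A:=one P)).
    { apply (rec_unique (a := z) (f := s ⊚ p2 P)); split; intros; norm;
        try reflexivity.
      all: replace p with (bang P Z) by (symmetry; apply bang_unique);
        first [reflexivity | apply A0 | apply AS]. }
    intros. transitivity (add ⊚ pair P (z ⊚ p1 P) (p2 P) ⊚ pair P (bang P Z) n).
    + norm. reflexivity.
    + rewrite E. norm. reflexivity.
Qed.

Lemma it_ex (X A : C) (c : hom X (prod P A X)) : exists it : hom (prod P X N) X,
  (forall Z (p : hom Z X), it ⊚ pair P p (z ⊚ bang P Z) = p) /\
  (forall Z (p : hom Z X) (n : hom Z N), it ⊚ pair P p (s ⊚ n) = p2 P ⊚ (c ⊚ (it ⊚ pair P p n))) /\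
  (forall Z (p : hom Z X) (n : hom Z N), it ⊚ pair P (p2 P ⊚ (c ⊚ p)) n = p2 P ⊚ (c ⊚ (it ⊚ pair P p n))).
Proof.
  destruct (HN (idm X) (p2 P ⊚ (c ⊚ p2 P))) as [it [[H0 HS] _]].
  assert (A0 : forall Z (p : hom Z X), it ⊚ pair P p (z ⊚ bang P Z) = p).
  { intros. rewrite H0. apply comp_id_l. }
  assert (AS : forall Z (p : hom Z X) (n : hom Z N), it ⊚ pair P p (s ⊚ n) = p2 P ⊚ (c ⊚ (it ⊚ pair P p n))).
  { intros. rewrite HS. norm. reflexivity. }
  exists it. split; [exact A0|]. split; [exact AS|].
  assert (E : it ⊚ pair P (p2 P ⊚ (c ⊚ p1 P)) (p2 P) = p2 P ⊚ (c ⊚ it)).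
  { apply (rec_unique (a := p2 P ⊚ c) (f := p2 P ⊚ (c ⊚ p2 P))); split; intros; norm;
      rewrite ?A0, ?AS; norm; try reflexivity. }
  intros. transitivity (it ⊚ pair P (p2 P ⊚ (c ⊚ p1 P)) (p2 P) ⊚ pair P p n).
  + norm. reflexivity.
  + rewrite E. norm. reflexivity.
Qed.
End PN.

Section Main.
Variables (C : Cat) (P : FinProd C) (N : C) (z : hom (one P) N) (s : hom N N)
  (HN : is_PNNO z s) (E : Exponentials P N).

Lemma head_comp (A Z Y : C) (x : hom Z (expo E A)) (h : hom Y Z) :
  head z x ⊚ h = head z (x ⊚ h).
Proof. unfold head, at_. norm. reflexivity. Qed.

Lemma shift_comp (A Z Y : C) (x : hom Z (expo E A)) (h : hom Y Z) :
  shift s x ⊚ h = shift s (x ⊚ h).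
Proof. unfold shift. rewrite lam_comp. f_equal. norm. reflexivity. Qed.

Lemma unfold_iff (A : C) (m : hom (prod P A A) A) (M : hom (expo E A) A) :
  unfolding z s m M <->
  m ⊚ fprod P (idm A) M ⊚ pair P (head z (idm (expo E A))) (shift s (idm (expo E A))) = M.
Proof.
  split.
  - intro H. assert (H1 := H _ (idm _)). rewrite comp_id_r in H1.
    norm. symmetry. exact H1.
  - intros H Z x. set (c := pair P (head z (idm (expo E A))) (shift s (idm (expo E A)))) in H.
    transitivity ((m ⊚ fprod P (idm A) M ⊚ c) ⊚ x). { rewrite H. reflexivity. }
    unfold c. norm. rewrite head_comp, shift_comp, !comp_id_l. reflexivity.
Qed.

Lemma iter_unique (A : C) (m : hom (prod P A A) A) :
  iterative m -> exists! M : hom (expo E A) A, unfolding z s m M.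
Proof.
  intro Hit. destruct (Hit _ (pair P (head z (idm (expo E A))) (shift s (idm (expo E A))))) as [u [Hu Hun]].
  exists u. split.
  - apply unfold_iff. exact Hu.
  - intros M HM. apply Hun. apply unfold_iff. exact HM.
Qed.

Lemma iter_canon (A : C) (m : hom (prod P A A) A) (M : hom (expo E A) A) :
  iterative m -> unfolding z s m M -> canonicity z s m M.
Proof.
  intros Hit HM Z x y Hxy.
  destruct (add_ex HN) as [add [A0 [AS [ASl A0l]]]].
  set (c0 := pair P (ev E A ⊚ pair P (x ⊚ p1 P) (p2 P)) (pair P (p1 P) (s ⊚ p2 P))
        : hom (prod P Z N) (prod P A (prod P Z N))).
  set (phi := lam E (ev E A ⊚ pair P (x ⊚ (p1 P ⊚ p1 P)) (add ⊚ pair P (p2 P ⊚ p1 P) (p2 P)))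
        : hom (prod P Z N) (expo E A)).
  destruct (Hit _ c0) as [u [_ Hun]].
  assert (U1 : u = ev E A ⊚ pair P (y ⊚ p1 P) (p2 P)).
  { apply Hun. unfold c0. norm. assert (H := Hxy _ (p1 P) (p2 P)). unfold at_ in H.
    symmetry. exact H. }
  assert (Hh : head z phi = ev E A ⊚ pair P (x ⊚ p1 P) (p2 P)).
  { unfold head, at_, phi. norm2. rewrite A0. reflexivity. }
  assert (Hs : shift s phi = phi ⊚ pair P (p1 P) (s ⊚ p2 P)).
  { apply expo_ext. unfold shift, phi. norm2. rewrite AS, ASl. reflexivity. }
  assert (U2 : u = M ⊚ phi).
  { apply Hun. unfold c0. norm. rewrite (HM _ phi), Hh, Hs. norm. reflexivity. }
  assert (Hp : phi ⊚ pair P (idm Z) (z ⊚ bang P Z) = x).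
  { apply expo_ext. unfold phi. norm2. rewrite A0l. reflexivity. }
  rewrite <- Hp. unfold head, at_.
  transitivity (u ⊚ pair P (idm Z) (z ⊚ bang P Z)).
  - rewrite U1. norm. reflexivity.
  - rewrite U2. norm. reflexivity.
Qed.

Lemma canon_iter (A : C) (m : hom (prod P A A) A) (M : hom (expo E A) A) :
  unfolding z s m M -> canonicity z s m M -> iterative m.
Proof.
  intros HM HC X c.
  destruct (it_ex HN c) as [it [I0 [IS IC]]].
  set (sigma := lam E (p1 P ⊚ (c ⊚ it))).
  assert (Hh : head z sigma = p1 P ⊚ c).
  { unfold head, at_, sigma. norm2. rewrite I0. norm. reflexivity. }
  assert (Hs : shift s sigma = sigma ⊚ (p2 P ⊚ c)).
  { apply expo_ext. unfold shift, sigma. norm2. rewrite IS, IC. norm. reflexivity. }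
  exists (M ⊚ sigma). split.
  - assert (H := HM _ sigma). rewrite Hh, Hs in H. norm. symmetry. exact H.
  - intros u' Hu'.
    assert (H := HC X sigma (lam E (u' ⊚ it))).
    unfold head, at_ in H. rewrite ev_lam_pair0, <- comp_assoc, I0, comp_id_r in H.
    symmetry. apply H. intros W w i. unfold at_, sigma. norm2.
    rewrite IS.
    transitivity ((m ⊚ fprod P (idm A) u' ⊚ c) ⊚ (it ⊚ pair P w i)).
    + rewrite Hu'. reflexivity.
    + norm. reflexivity.
Qed.

Lemma hom_pres (A A' : C) (m : hom (prod P A A) A) (m' : hom (prod P A' A') A')
  (M : hom (expo E A) A) (M' : hom (expo E A') A') (f : hom A A') :
  iterative m' -> unfolding z s m M -> unfolding z s m' M' ->
  is_midpoint_hom m m' f ->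
  forall (Z : C) (x : hom Z (expo E A)), f ⊚ (M ⊚ x) = M' ⊚ mapseq f x.
Proof.
  intros Hit HM HM' Hf Z x.
  destruct (Hit _ (pair P (f ⊚ head z (idm (expo E A))) (shift s (idm (expo E A))))) as [u [_ Hun]].
  assert (U1 : u = f ⊚ M).
  { apply Hun. norm. assert (H := HM _ (idm _)). rewrite comp_id_r in H.
    transitivity (f ⊚ (m ⊚ pair P (head z (idm (expo E A))) (M ⊚ shift s (idm (expo E A))))).
    - rewrite Hf. norm. reflexivity.
    - rewrite <- H. reflexivity. }
  assert (Hh : head z (mapseq f (idm (expo E A))) = f ⊚ head z (idm (expo E A))).
  { unfold head, at_, mapseq. norm2. reflexivity. }
  assert (Hs : shift s (mapseq f (idm (expo E A))) = mapseq f (idm (expo E A)) ⊚ shift s (idm (expo E A))).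
  { apply expo_ext. unfold shift, mapseq. norm2. reflexivity. }
  assert (U2 : u = M' ⊚ mapseq f (idm (expo E A))).
  { apply Hun. assert (H := HM' _ (mapseq f (idm (expo E A)))). rewrite Hh, Hs in H.
    norm. symmetry. exact H. }
  assert (Hmx : mapseq f (idm (expo E A)) ⊚ x = mapseq f x).
  { unfold mapseq. rewrite lam_comp. f_equal. norm. reflexivity. }
  rewrite <- Hmx, comp_assoc, comp_assoc, <- U1, U2. norm. reflexivity.
Qed.
End Main.

Theorem mainTheorem1 (C : Cat) (P : FinProd C) (N : C)
  (z : hom (one P) N) (s : hom N N) (HN : is_PNNO z s)
  (E : Exponentials P N) :
  (forall (A : C) (m : hom (prod P A A) A),
     is_midpoint m ->
     (iterative m <->
        exists M : hom (expo E A) A,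
          unfolding z s m M /\ canonicity z s m M) /\
     (iterative m -> exists! M : hom (expo E A) A, unfolding z s m M)) /\
  (forall (A A' : C) (m : hom (prod P A A) A) (m' : hom (prod P A' A') A')
          (M : hom (expo E A) A) (M' : hom (expo E A') A') (f : hom A A'),
     is_midpoint m -> is_midpoint m' ->
     iterative m -> iterative m' ->
     unfolding z s m M -> unfolding z s m' M' ->
     is_midpoint_hom m m' f ->
     forall (Z : C) (x : hom Z (expo E A)),
       f ⊚ (M ⊚ x) = M' ⊚ mapseq f x).
Proof.
  split.
  - intros A m _. split.
    + split.
      * intro Hit. destruct (iter_unique z s E Hit) as [M [HM _]].
        exists M. split; [exact HM | exact (iter_canon HN Hit HM)].
      * intros [M [HM HC]]. exact (canon_iter HN HM HC).
    + intro Hit. exact (iter_unique z s E Hit).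
  - intros A A' m m' M M' f _ _ _ Hit' HM HM' Hf Z x.
    exact (hom_pres Hit' HM HM' Hf x).
Qed.
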